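(* Let $d\ge 1$, $A \in \mathbb{R}^{d+1}$ and $\Xi \in \mathbb{R}^{(d+1)\times d}$. Let $\Delta_d=\{\lambda\in\mathbb{R}^{d+1}:\lambda_i\ge 0,\sum_i\lambda_i=1\}$, integrate over $\Delta_d$ with respect to its $d$-dimensional Lebesgue (surface) measure, let $v(d)=\int_{\Delta_d}\mathrm{d}\lambda$, and let $\Sigma(d)$ be the covariance matrix of the uniform distribution on $\Delta_d$ (the Dirichlet$(1,\dots,1)$ distribution). Then $$\min_{\alpha_0\in\mathbb{R},\,\alpha\in\mathbb{R}^d}\ \int_{\Delta_d}\bigl(\alpha_0 - (A - \Xi\alpha)^\top\lambda\bigr)^2\,\mathrm{d}\lambda = v(d)\, A^\top\Bigl(\Sigma(d) - \Sigma(d)\,\Xi\,\bigl(\Xi^\top\Sigma(d)\,\Xi\bigr)^\dagger\,\Xi^\top\Sigma(d)\Bigr)A.$$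
   Context: $M^\dagger$ denotes the Moore–Penrose pseudoinverse of a matrix $M$. *)

(* Defs.v *)
From HB Require Import structures.
From mathcomp Require Import all_boot all_order all_algebra.
From mathcomp Require Import all_classical all_reals all_analysis.
Set Implicit Arguments. Unset Strict Implicit. Unset Printing Implicit Defensive.
Import Order.TTheory GRing.Theory Num.Theory.
Local Open Scope classical_set_scope.
Local Open Scope ring_scope.

Section Defs.
Variable R : realType.

Definition is_MP_inverse m n (M : 'M[R]_(m, n)) (X : 'M[R]_(n, m)) : Prop :=
  [/\ M *m X *m M = M, X *m M *m X = X,
      (M *m X)^T = M *m X & (X *m M)^T = X *m M].

Definition mp_pinv m n (M : 'M[R]_(m, n)) : 'M[R]_(n, m) :=
  xget 0 (is_MP_inverse M).

(** Iterated Lebesgue integral over the corner simplex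
    {x in R^n : x_i >= 0, sum_i x_i <= s}:
    int_{x_1 = 0}^{s} int_{x_2 = 0}^{s - x_1} ... f (x_1, ..., x_n). *)
Fixpoint corner_int (n : nat) (s : R) (f : seq R -> R) {struct n} : R :=
  match n with
  | 0 => f [::]
  | n'.+1 => Rintegral (@lebesgue_measure R) `[0, s]
               (fun t => corner_int n' (s - t) (fun xs => f (t :: xs)))
  end.

Definition simplex_pt (d : nat) (xs : seq R) : 'cV[R]_d.+1 :=
  \col_i nth 0 (xs ++ [:: 1 - \sum_(x <- xs) x]) i.

(** Parametrizing Delta_d by
    its first d coordinates, the surface element is sqrt(d+1) dx. *)
Definition simplex_int (d : nat) (g : 'cV[R]_d.+1 -> R) : R :=
  Num.sqrt (d.+1)%:R * corner_int d 1 (fun xs => g (simplex_pt d xs)).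

Definition simplex_vol (d : nat) : R := @simplex_int d (fun _ => 1).

Definition simplex_mean (d : nat) : 'cV[R]_d.+1 :=
  \col_i (@simplex_int d (fun l => l i 0) / simplex_vol d).

Definition simplex_cov (d : nat) : 'M[R]_d.+1 :=
  \matrix_(i, j) (@simplex_int d (fun l =>
      (l i 0 - simplex_mean d i 0) * (l j 0 - simplex_mean d j 0))
    / simplex_vol d).

Definition lsq_obj (d : nat) (A : 'cV[R]_d.+1) (Xi : 'M[R]_(d.+1, d))
    (a0 : R) (a : 'cV[R]_d) : R :=
  @simplex_int d (fun l => (a0 - ((A - Xi *m a)^T *m l) 0 0) ^+ 2).

End Defs.

(* Main.v *)
Require Import Defs.
From HB Require Import structures.
From mathcomp Require Import all_boot all_order all_algebra.
From mathcomp Require Import all_classical all_reals all_analysis.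
From mathcomp Require Import ring lra.
Import Order.TTheory GRing.Theory Num.Theory.
Import numFieldNormedType.Exports.
Local Open Scope ring_scope.
Set Implicit Arguments. Unset Strict Implicit. Unset Printing Implicit Defensive.

Section Poly.
Variable R : realType.

Inductive isP : ((nat -> R) -> R) -> Prop :=
| isP_c (a : R) : isP (fun _ => a)
| isP_v (k : nat) : isP (fun e => e k)
| isP_add f g : isP f -> isP g -> isP (fun e => f e + g e)
| isP_mul f g : isP f -> isP g -> isP (fun e => f e * g e).

Lemma isP_ext f g : isP f -> (forall e, f e = g e) -> isP g.
Proof. by move=> Pf fg; have -> : g = f by apply/funext => e; rewrite fg. Qed.

Lemma isP_subst H (rho : nat -> (nat -> R) -> R) :
  isP H -> (forall k, isP (rho k)) -> isP (fun e => H (fun k => rho k e)).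
Proof.
move=> PH Prho; elim: PH => [a|k|f g _ Pf _ Pg|f g _ Pf _ Pg].
- exact: isP_c.
- exact: Prho.
- exact: isP_add.
- exact: isP_mul.
Qed.

Lemma isP_sum (T : Type) (s : seq T) (f : T -> (nat -> R) -> R) :
  (forall i, isP (f i)) -> isP (fun e => \sum_(i <- s) f i e).
Proof.
move=> Pf; elim: s => [|x s IH].
  by apply: (isP_ext (isP_c (0:R))) => e; rewrite big_nil.
by apply: (isP_ext (isP_add (Pf x) IH)) => e; rewrite big_cons.
Qed.

Lemma isP_exp f n : isP f -> isP (fun e => f e ^+ n).
Proof.
move=> Pf; elim: n => [|n IH].
  by apply: (isP_ext (isP_c (1:R))) => e; rewrite expr0.
by apply: (isP_ext (isP_mul Pf IH)) => e; rewrite exprS.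
Qed.

Lemma isP_opp f : isP f -> isP (fun e => - f e).
Proof. by move=> Pf; apply: (isP_ext (isP_mul (isP_c (-1:R)) Pf)) => e; rewrite mulN1r. Qed.

Lemma isP_sub f g : isP f -> isP g -> isP (fun e => f e - g e).
Proof. by move=> Pf Pg; exact: (isP_add Pf (isP_opp Pg)). Qed.

Definition consenv (t : R) (e : nat -> R) : nat -> R :=
  fun k => if k is k'.+1 then e k' else t.

Lemma isP_nf H : isP H -> exists (P : (nat -> R) -> {poly R}) (N : nat),
  [/\ (forall i, isP (fun e => (P e)`_i)), (forall e, (size (P e) <= N)%N)
    & forall t e, H (consenv t e) = (P e).[t]].
Proof.
elim => [a|k|f g _ [P1 [N1 [c1 s1 h1]]] _ [P2 [N2 [c2 s2 h2]]]
        |f g _ [P1 [N1 [c1 s1 h1]]] _ [P2 [N2 [c2 s2 h2]]]].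
- exists (fun _ => a%:P), 1%N; split.
  + move=> i; apply: (isP_ext (isP_c (if i == 0%N then a else 0))) => e.
    by rewrite coefC.
  + by move=> e; rewrite size_polyC leq_b1.
  + by move=> t e; rewrite hornerC.
- case: k => [|k].
  + exists (fun _ => 'X), 2%N; split.
    * move=> i; apply: (isP_ext (isP_c ((i == 1%N)%:R))) => e.
      by rewrite coefX.
    * by move=> e; rewrite size_polyX.
    * by move=> t e; rewrite hornerX.
  + exists (fun e => (e k)%:P), 1%N; split.
    * move=> i; apply: (isP_ext (isP_mul (isP_c ((i == 0%N)%:R)) (isP_v k))) => e.
      by rewrite coefC; case: (i == 0%N); rewrite ?mul1r ?mul0r.
    * by move=> e; rewrite size_polyC leq_b1.
    * by move=> t e; rewrite hornerC.
- exists (fun e => P1 e + P2 e), (maxn N1 N2); split.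
  + move=> i; apply: (isP_ext (isP_add (c1 i) (c2 i))) => e.
    by rewrite coefD.
  + move=> e; apply: (leq_trans (size_polyD _ _)).
    by rewrite geq_max !leq_max s1 s2 orbT.
  + by move=> t e; rewrite hornerD h1 h2.
- exists (fun e => P1 e * P2 e), (N1 + N2)%N; split.
  + move=> i.
    have Ps := @isP_sum _ (index_enum 'I_i.+1)
       (fun j : 'I_i.+1 => fun e => (P1 e)`_j * (P2 e)`_(i - j))
       (fun j => isP_mul (c1 j) (c2 (i - j)%N)).
    by apply: (isP_ext Ps) => e; rewrite coefM.
  + move=> e; apply: (leq_trans (size_polyMleq _ _)).
    apply: (leq_trans (leq_pred _)); exact: leq_add.
  + by move=> t e; rewrite hornerM h1 h2.
Qed.

End Poly.

Section PInt.
Variable R : realType.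
Notation mu := (@lebesgue_measure R).

Lemma poly_FTC (p Q : {poly R}) (b : R) : Q^`() = p -> 0 <= b ->
  Rintegral mu `[0, b]%classic (horner p) = Q.[b] - Q.[0].
Proof.
move=> hQ; rewrite le_eqVlt => /predU1P[<-|b0].
  by rewrite set_itv1 Rintegral_set1 subrr.
rewrite /Rintegral (@continuous_FTC2 _ _ (horner Q)) //.
- by apply/continuous_subspaceT => x; exact: continuous_horner.
- split.
  + by move=> x _; exact: derivable_horner.
  + by apply: cvg_at_right_filter; exact: continuous_horner.
  + by apply: cvg_at_left_filter; exact: continuous_horner.
- by move=> x _; rewrite -derivE hQ.
Qed.

Lemma poly_integrable (p : {poly R}) (b : R) :
  mu.-integrable `[0, b]%classic (EFin \o horner p).
Proof.
apply: continuous_compact_integrable; first exact: segment_compact.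
by apply/continuous_subspaceT => x; exact: continuous_horner.
Qed.

Definition antider (p : {poly R}) : {poly R} :=
  \poly_(i < (size p).+1) (if i is j.+1 then p`_j / j.+1%:R else 0).

Lemma coef_antider p i :
  (antider p)`_i = if i is j.+1 then p`_j / j.+1%:R else 0.
Proof.
rewrite /antider; rewrite (coef_poly (size p).+1 (fun i => if i is j.+1 then p`_j / j.+1%:R else 0)).
case: i => [|j]; first by [].
rewrite ltnS; case: ltnP => // hj.
by rewrite nth_default ?mul0r.
Qed.

Lemma antiderK p : (antider p)^`() = p.
Proof.
apply/polyP => i; rewrite coef_deriv coef_antider. rewrite -(mulr_natr (p`_i / i.+1%:R)) mulfVK //.
Qed.

Lemma size_antider p : (size (antider p) <= (size p).+1)%N.
Proof. exact: size_poly. Qed.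

Lemma poly_int (p : {poly R}) (b : R) : 0 <= b ->
  Rintegral mu `[0, b]%classic (horner p) = (antider p).[b].
Proof.
move=> b0; rewrite (poly_FTC (antiderK p) b0) horner_coef0 coef_antider.
by rewrite subr0.
Qed.

End PInt.

Section Key.
Variable R : realType.
Notation mu := (@lebesgue_measure R).

Definition catenv (xs : seq R) (e : nat -> R) : nat -> R :=
  fun k => if (k < size xs)%N then nth 0 xs k else e (k - size xs)%N.

Definition jp n (F : (nat -> R) -> seq R -> R) :=
  exists G, isP G /\ forall e xs, size xs = n -> F e xs = G (catenv xs e).

Definition shiftF (F : (nat -> R) -> seq R -> R) : (nat -> R) -> seq R -> R :=
  fun e' xs => F (fun k => e' k.+1) (e' 0%N :: xs).

Lemma jp_shift n F : jp n.+1 F -> jp n (shiftF F).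
Proof.
move=> [G [PG hG]].
exists (fun E => G (fun k => if k == 0%N then E n else if (k <= n)%N then E k.-1 else E k)).
split.
  apply: (isP_subst (rho := fun k E => if k == 0%N then E n else if (k <= n)%N then E k.-1 else E k)) => // k.
  by case: (k == 0%N); [exact: isP_v| case: (k <= n)%N; exact: isP_v].
move=> e xs sx; rewrite /shiftF hG /= ?sx //; congr G; apply/funext => k.
rewrite /catenv /= sx; case: k => [|k] /=; first by rewrite ltnn subnn.
rewrite ltnS; case: ltnP => hk //=.
by rewrite ltnNge (leq_trans hk (leqnSn k)) /= subSS subSn.
Qed.

Lemma key n : forall (F : (nat -> R) -> seq R -> R) (sg : (nat -> R) -> R),
  jp n F -> isP sg -> exists K, isP K /\
    forall e, 0 <= sg e -> corner_int n (sg e) (F e) = K e.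
Proof.
elim: n => [|n IH] F sg hF Psg.
  case: hF => G [PG hG]; exists G; split => // e _ /=.
  rewrite (hG e [::]) //; congr G; apply/funext => k.
  by rewrite /catenv /= subn0.
have Psg' : isP (fun e' => sg (fun k => e' k.+1) - e' 0%N).
  apply: isP_sub; last exact: isP_v.
  by apply: (isP_subst (rho := fun k E => E k.+1)) => // k; exact: isP_v.
have [K' [PK' hK']] := IH _ _ (jp_shift hF) Psg'.
have [P [N [cP sP hP]]] := isP_nf PK'.
exists (fun e => \sum_(i < N.+1) (antider (P e))`_i * (sg e) ^+ i); split.
  apply: (@isP_sum _ _ (index_enum 'I_N.+1)
     (fun i : 'I_N.+1 => fun e => (antider (P e))`_i * (sg e) ^+ i)) => i.
  apply: isP_mul; last exact: isP_exp.
  case: i => [[|j] hj] /=.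
    by apply: (isP_ext (isP_c 0)) => e; rewrite coef_antider.
  by apply: (isP_ext (isP_mul (cP j) (isP_c (j.+1%:R)^-1))) => e; rewrite coef_antider.
move=> e sge /=.
transitivity (Rintegral mu `[0, sg e]%classic (horner (P e))).
  apply: eq_Rintegral => t ht; transitivity (K' (consenv t e)); last exact: hP.
  apply: hK'.
  by move: ht; rewrite inE /= in_itv /= subr_ge0 => /andP[_ ->].
rewrite poly_int // (@horner_coef_wide _ N.+1) // (leq_trans (size_antider _)) // ltnS; exact: sP.
Qed.

End Key.

Section Lin.
Variable R : realType.
Notation mu := (@lebesgue_measure R).

Lemma cint_integrable n (F : (nat -> R) -> seq R -> R) e s :
  jp n.+1 F -> 0 <= s ->
  mu.-integrable `[0, s]%classic
    (EFin \o (fun t => corner_int n (s - t) (fun xs => F e (t :: xs)))).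
Proof.
move=> hF s0.
have Psg : isP (fun e' : nat -> R => s - e' 0%N).
  by apply: isP_sub; [exact: isP_c| exact: isP_v].
have [K [PK hK]] := key (jp_shift hF) Psg.
have [P [N [cP sP hP]]] := isP_nf PK.
have := @eq_integrable _ _ _ mu _ (measurable_itv `[0, s]) (EFin \o horner (P e)) _ _ (poly_integrable (P e) s). apply.
  move=> t ht /=; congr EFin; transitivity (K (consenv t e)); first by rewrite hP.
  symmetry; apply: hK.
  by move: ht; rewrite inE /= in_itv /= subr_ge0 => /andP[_ ->].
Qed.

Lemma cint_lin n : forall (F1 F2 : (nat -> R) -> seq R -> R),
  jp n F1 -> jp n F2 -> forall a e s, 0 <= s ->
  corner_int n s (fun xs => a * F1 e xs + F2 e xs) =
  a * corner_int n s (F1 e) + corner_int n s (F2 e).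
Proof.
elim: n => [|n IH] F1 F2 h1 h2 a e s s0 //=.
transitivity (Rintegral mu `[0, s]%classic (fun t =>
   a * corner_int n (s - t) (fun xs => F1 e (t :: xs)) +
   corner_int n (s - t) (fun xs => F2 e (t :: xs)))).
  apply: eq_Rintegral => t ht.
  apply: (IH (shiftF F1) (shiftF F2) (jp_shift h1) (jp_shift h2) a (consenv t e)).
  by move: ht; rewrite inE /= in_itv /= subr_ge0 => /andP[_ ->].
rewrite RintegralD //.
- by rewrite RintegralZl //; exact: cint_integrable.
- exact: (integrableZl _ a (cint_integrable e h1 s0)).
- exact: cint_integrable.
Qed.

Lemma cint_ge0 n : forall (f : seq R -> R) s, (forall xs, 0 <= f xs) ->
  0 <= corner_int n s f.
Proof.
elim: n => [|n IH] f s hf //=.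
by apply: Rintegral_ge0 => t _; apply: IH => xs.
Qed.

Lemma cint_one n : forall s : R, 0 <= s ->
  corner_int n s (fun _ => 1) = s ^+ n / n`!%:R.
Proof.
elim: n => [|n IH] s s0 /=; first by rewrite expr0 fact0 divr1.
set u : {poly R} := s%:P - 'X.
have hh : forall t : R, ((n`!%:R)^-1 *: u ^+ n).[t] = (s - t) ^+ n / n`!%:R.
  by move=> t; rewrite hornerZ horner_exp /u hornerD hornerN hornerC hornerX mulrC.
transitivity (Rintegral mu `[0, s]%classic (horner ((n`!%:R)^-1 *: u ^+ n))).
  apply: eq_Rintegral => t ht.
  rewrite IH; last by move: ht; rewrite inE /= in_itv /= subr_ge0 => /andP[_ ->].
  exact: (esym (hh t)).
rewrite (@poly_FTC _ _ (- (((n.+1)`!%:R)^-1 *: u ^+ n.+1))) //.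
  rewrite !hornerN !hornerZ !horner_exp /u !hornerD !hornerN !hornerC !hornerX.
  by rewrite subrr expr0n /= mulr0 oppr0 sub0r opprK addr0 mulrC.
rewrite derivN derivZ deriv_exp /u derivB derivC derivX sub0r mulN1r mulNrn.
rewrite scalerN opprK -(scaler_nat n.+1 ((s%:P - 'X) ^+ n.+1.-1)) scalerA /=.
congr (_ *: _).
rewrite factS natrM invfM mulrAC mulVf ?mul1r // pnatr_eq0.
Qed.

End Lin.

Section Top.
Variable R : realType.
Variable d : nat.

Definition good (g : 'cV[R]_d.+1 -> R) := jp d (fun _ xs => g (simplex_pt d xs)).

Lemma good_ext f g : good f -> (forall l, f l = g l) -> good g.
Proof. by move=> hf fg; have -> : g = f by apply/funext => l; rewrite fg. Qed.

Lemma good_c a : good (fun _ => a).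
Proof. by exists (fun _ => a); split => //; exact: isP_c. Qed.

Lemma good_add f g : good f -> good g -> good (fun l => f l + g l).
Proof.
move=> [F [PF hF]] [G [PG hG]]; exists (fun E => F E + G E); split.
  exact: isP_add.
by move=> e xs sx; rewrite (hF e) // (hG e).
Qed.

Lemma good_mul f g : good f -> good g -> good (fun l => f l * g l).
Proof.
move=> [F [PF hF]] [G [PG hG]]; exists (fun E => F E * G E); split.
  exact: isP_mul.
by move=> e xs sx; rewrite (hF e) // (hG e).
Qed.

Lemma good_sum (I : Type) (s : seq I) (f : I -> 'cV[R]_d.+1 -> R) :
  (forall i, good (f i)) -> good (fun l => \sum_(i <- s) f i l).
Proof.
move=> hf; elim: s => [|x s IH].
  by apply: (good_ext (good_c 0)) => l; rewrite big_nil.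
by apply: (good_ext (good_add (hf x) IH)) => l; rewrite big_cons.
Qed.

Lemma good_coord (i : 'I_d.+1) : good (fun l => l i 0).
Proof.
exists (fun E : nat -> R => if (i < d)%N then E i else 1 - \sum_(k < d) E k); split.
  case: (i < d)%N; first exact: isP_v.
  apply: isP_sub; first exact: isP_c.
  apply: (@isP_sum _ _ (index_enum 'I_d) (fun k : 'I_d => fun E : nat -> R => E k)) => k; exact: isP_v.
move=> e xs sx; rewrite /simplex_pt mxE nth_cat sx.
case: ltnP => hi; first by rewrite /catenv sx hi.
have -> : nat_of_ord i = d by apply/eqP; rewrite eqn_leq hi -ltnS ltn_ord.
rewrite subnn /= (big_nth 0) sx big_mkord; congr (_ - _).
by apply: eq_bigr => k _; rewrite /catenv sx ltn_ord.
Qed.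

Notation I := (@simplex_int R d).

Lemma I_ext f g : (forall l, f l = g l) -> I f = I g.
Proof. by move=> fg; have -> : f = g by apply/funext. Qed.

Lemma I_lin a g1 g2 : good g1 -> good g2 ->
  I (fun l => a * g1 l + g2 l) = a * I g1 + I g2.
Proof.
move=> h1 h2; rewrite /simplex_int.
rewrite (cint_lin h1 h2 a (fun _ => 0) ler01).
by rewrite mulrDr mulrCA.
Qed.

Lemma I_0 : I (fun _ => 0) = 0.
Proof.
have := I_lin 1 (good_c 0) (good_c 0).
rewrite (I_ext (g := fun _ => 0)) => [|l]; last by rewrite mulr0 addr0.
by rewrite mul1r => h; apply: (@addrI _ (I (fun _ => 0))); rewrite addr0 -h.
Qed.

Lemma I_scale a g : good g -> I (fun l => a * g l) = a * I g.
Proof.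
move=> hg; rewrite -[RHS]addr0 -I_0 -I_lin //; last exact: good_c.
by apply: I_ext => l; rewrite addr0.
Qed.

Lemma I_add g1 g2 : good g1 -> good g2 -> I (fun l => g1 l + g2 l) = I g1 + I g2.
Proof.
move=> h1 h2; rewrite -[I g1]mul1r -I_lin //.
by apply: I_ext => l; rewrite mul1r.
Qed.

Lemma I_sum (J : Type) (s : seq J) (f : J -> 'cV[R]_d.+1 -> R) :
  (forall i, good (f i)) -> I (fun l => \sum_(i <- s) f i l) = \sum_(i <- s) I (f i).
Proof.
move=> hf; elim: s => [|x s IH].
  transitivity (I (fun _ => 0)); last by rewrite I_0 big_nil.
  by apply: I_ext => l; rewrite big_nil.
rewrite big_cons -IH -I_add //; last exact: good_sum.
by apply: I_ext => l; rewrite big_cons.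
Qed.

Lemma I_ge0 g : (forall l, 0 <= g l) -> 0 <= I g.
Proof.
move=> hg; rewrite /simplex_int mulr_ge0 ?sqrtr_ge0 // cint_ge0 //.
Qed.

Lemma vol_gt0 : 0 < simplex_vol R d.
Proof.
rewrite /simplex_vol /simplex_int cint_one ?ler01 // expr1n mul1r.
Qed.

End Top.

Section Stat.
Variable R : realType.
Variable d : nat.
Notation I := (@simplex_int R d).
Notation v := (simplex_vol R d).
Notation mu i := (simplex_mean R d i 0).
Notation S := (simplex_cov R d).

Lemma v_neq0 : v != 0.
Proof. by rewrite gt_eqF // vol_gt0. Qed.

Lemma I_cst a : I (fun _ => a) = a * v.
Proof.
rewrite /simplex_vol -I_scale; last exact: good_c.
by apply: I_ext => l; rewrite mulr1.
Qed.

Lemma I_coord i : I (fun l => l i 0) = v * mu i.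
Proof. by rewrite mxE mulrC divfK // v_neq0. Qed.

Lemma I_cov i j : I (fun l => (l i 0 - mu i) * (l j 0 - mu j)) = v * S i j.
Proof. by rewrite [S i j]mxE mulrC divfK // v_neq0. Qed.

Lemma good_dev i : good (fun l : 'cV[R]_d.+1 => l i 0 - mu i).
Proof. by apply: good_add; [exact: good_coord | exact: good_c]. Qed.

Definition yc (c : 'cV[R]_d.+1) (l : 'cV[R]_d.+1) :=
  \sum_(i < d.+1) c i 0 * (l i 0 - mu i).

Lemma good_y c : good (yc c).
Proof. by apply: good_sum => i; apply: good_mul; [exact: good_c|exact: good_dev]. Qed.

Lemma I_y c : I (yc c) = 0.
Proof.
rewrite /yc I_sum; last by move=> i; apply: good_mul; [exact: good_c|exact: good_dev].
apply: big1 => i _; rewrite I_scale; last exact: good_dev.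
rewrite I_add ?I_coord ?I_cst; [|exact: good_coord|exact: good_c].
by rewrite mulNr [mu i * _]mulrC subrr mulr0.
Qed.

Lemma I_y2 c : I (fun l => yc c l ^+ 2) = v * (c^T *m S *m c) 0 0.
Proof.
transitivity (I (fun l => \sum_(i < d.+1) \sum_(j < d.+1)
   (c i 0 * c j 0) * ((l i 0 - mu i) * (l j 0 - mu j)))).
  apply: I_ext => l; rewrite expr2 /yc mulr_suml; apply: eq_bigr => i _.
  rewrite mulr_sumr; apply: eq_bigr => j _; ring.
rewrite I_sum; last first.
  by move=> i; apply: good_sum => j; apply: good_mul; [exact: good_c|apply: good_mul; exact: good_dev].
transitivity (\sum_(i < d.+1) \sum_(j < d.+1) c i 0 * c j 0 * (v * S i j)).
  apply: eq_bigr => i _; rewrite I_sum; last first.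
    by move=> j; apply: good_mul; [exact: good_c|apply: good_mul; exact: good_dev].
  apply: eq_bigr => j _; rewrite I_scale ?I_cov //.
  by apply: good_mul; exact: good_dev.
rewrite !mxE mulr_sumr exchange_big /=; apply: eq_bigr => j _.
rewrite !mxE mulr_suml mulr_sumr; apply: eq_bigr => i _.
rewrite !mxE; ring.
Qed.

Lemma obj_eq (A : 'cV[R]_d.+1) (Xi : 'M[R]_(d.+1, d)) a0 a :
  let c := A - Xi *m a in
  lsq_obj A Xi a0 a =
  v * (a0 - \sum_(i < d.+1) c i 0 * mu i) ^+ 2 + v * (c^T *m S *m c) 0 0.
Proof.
move=> c; rewrite /lsq_obj -/c.
set m := a0 - \sum_(i < d.+1) c i 0 * mu i.
transitivity (I (fun l => m ^+ 2 * 1 + ((- (2 * m)) * yc c l + yc c l ^+ 2))).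
  apply: I_ext => l.
  have -> : (c^T *m l) 0 0 = \sum_(i < d.+1) c i 0 * mu i + yc c l.
    rewrite mxE /yc -big_split /=; apply: eq_bigr => i _; rewrite mxE; ring.
  rewrite /m; ring.
rewrite I_lin; [|exact: good_c|]; last first.
  apply: good_add; last by apply: good_mul; exact: good_y.
  by apply: good_mul; [exact: good_c|exact: good_y].
rewrite I_lin; [|exact: good_y|by apply: good_mul; exact: good_y].
rewrite I_y I_y2 -/(simplex_vol R d); ring.
Qed.

Lemma S_sym : S^T = S.
Proof. by apply/matrixP => i j; rewrite !mxE; congr (_ / _); apply: I_ext => l; rewrite mulrC. Qed.

Lemma S_psd (x : 'cV[R]_d.+1) : 0 <= (x^T *m S *m x) 0 0.
Proof.
have := I_y2 x; have := @I_ge0 _ d (fun l => yc x l ^+ 2) (fun l => sqr_ge0 _).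
move=> h1 h2; rewrite h2 in h1.
by rewrite -(pmulr_rge0 _ (vol_gt0 R d)).
Qed.

End Stat.

Section MP.
Variable R : realType.

Lemma rowv_sq0 m (w : 'rV[R]_m) : w *m w^T = 0 -> w = 0.
Proof.
move=> h; apply/rowP => j; rewrite mxE.
have h0 : \sum_(k < m) (w 0 k) ^+ 2 = 0.
  transitivity ((w *m w^T) 0 0); last by rewrite h mxE.
  by rewrite mxE; apply: eq_bigr => k _; rewrite mxE expr2.
have := @psumr_eq0P _ _ xpredT (fun k => w 0 k ^+ 2) (fun k _ => sqr_ge0 _) h0 j isT.
by move/eqP; rewrite sqrf_eq0 => /eqP.
Qed.

Lemma unit_gram r m (P : 'M[R]_(r, m)) : row_free P -> P *m P^T \in unitmx.
Proof.
move=> fP; rewrite -row_free_unit -kermx_eq0; apply/eqP/row_matrixP => i.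
rewrite row0; set u := row i _.
have hu : u *m (P *m P^T) = 0 by rewrite /u -row_mul mulmx_ker row0.
have hw : u *m P = 0.
  apply: rowv_sq0; by rewrite trmx_mul mulmxA -(mulmxA u) hu mul0mx.
have : (u <= kermx P)%MS by apply/sub_kermxP.
by move: fP; rewrite -kermx_eq0 => /eqP ->; rewrite submx0 => /eqP.
Qed.

Lemma MP_prod m n r (C : 'M[R]_(m, r)) (F : 'M[R]_(r, n)) :
  C^T *m C \in unitmx -> F *m F^T \in unitmx ->
  is_MP_inverse (C *m F) (F^T *m invmx (F *m F^T) *m invmx (C^T *m C) *m C^T).
Proof.
move=> uC uF.
set iF := invmx (F *m F^T); set iC := invmx (C^T *m C).
set X := F^T *m iF *m iC *m C^T.
have e1 : F *m X = iC *m C^T.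
  by rewrite /X !mulmxA mulmxV // mul1mx.
have e2 : X *m C = F^T *m iF.
  by rewrite /X -!mulmxA mulVmx // mulmx1.
have siC : iC^T = iC by rewrite /iC trmx_inv trmx_mul trmxK.
have siF : iF^T = iF by rewrite /iF trmx_inv trmx_mul trmxK.
split.
- transitivity (C *m (F *m X) *m C *m F); first by rewrite !mulmxA.
  rewrite e1; transitivity (C *m (iC *m (C^T *m C)) *m F); first by rewrite !mulmxA.
  by rewrite mulVmx // mulmx1.
- transitivity ((X *m C) *m (F *m X)); first by rewrite !mulmxA.
  by rewrite e1 e2 /X !mulmxA.
- have -> : C *m F *m X = C *m (iC *m C^T) by rewrite -mulmxA e1.
  by rewrite !trmx_mul trmxK siC mulmxA.
- have -> : X *m (C *m F) = F^T *m iF *m F by rewrite mulmxA e2.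
  by rewrite !trmx_mul trmxK siF mulmxA.
Qed.

Lemma MP_exists m n (M : 'M[R]_(m, n)) : exists X, is_MP_inverse M X.
Proof.
have uF : row_base M *m (row_base M)^T \in unitmx.
  by apply: unit_gram; exact: row_base_free.
have uC : (col_base M)^T *m col_base M \in unitmx.
  rewrite -[X in _ *m X]trmxK; apply: unit_gram.
  by rewrite /row_free mxrank_tr; exact: col_base_full.
have := MP_prod uC uF; rewrite mulmx_base => h.
by eexists; exact: h.
Qed.

End MP.

Section Min.
Variable R : realType.

Lemma quad0 (beta gam : R) : 0 <= gam ->
  (forall t, 0 <= 2 * t * beta + t ^+ 2 * gam) -> beta = 0.
Proof.
move=> g0 h.
have u0 : 0 < (gam + 1)^-1 by rewrite invr_gt0; lra.
set u := (gam + 1)^-1 in u0.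
have hu1 : u * (gam + 1) = 1 by rewrite /u mulVf //; apply: lt0r_neq0; lra.
have hu : u * gam = 1 - u by rewrite -hu1 mulrDr mulr1 addrK.
have := h (- beta * u).
have -> : 2 * (- beta * u) * beta + (- beta * u) ^+ 2 * gam =
          - (beta ^+ 2 * u) - beta ^+ 2 * u ^+ 2.
  transitivity (-(2 * beta^+2 * u) + beta^+2 * u * (u * gam)); first by ring.
  rewrite hu; ring.
move=> h2.
have : beta ^+ 2 * u <= 0 by nra.
rewrite pmulr_lle0 // => hb.
by apply/eqP; rewrite -sqrf_eq0 eq_le hb sqr_ge0.
Qed.


Definition Bf m (S : 'M[R]_m) (a b : 'cV[R]_m) := (a^T *m S *m b) 0 0.

Lemma BfDl m (S : 'M[R]_m) a b c : Bf S (a + b) c = Bf S a c + Bf S b c.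
Proof. by rewrite /Bf linearD /= !mulmxDl mxE. Qed.
Lemma BfDr m (S : 'M[R]_m) a b c : Bf S a (b + c) = Bf S a b + Bf S a c.
Proof. by rewrite /Bf !mulmxDr mxE. Qed.
Lemma BfZl m (S : 'M[R]_m) t a c : Bf S (t *: a) c = t * Bf S a c.
Proof. by rewrite /Bf linearZ /= -!scalemxAl mxE. Qed.
Lemma BfZr m (S : 'M[R]_m) t a c : Bf S a (t *: c) = t * Bf S a c.
Proof. by rewrite /Bf -!scalemxAr mxE. Qed.
Lemma Bf_sym m (S : 'M[R]_m) a b : S^T = S -> Bf S a b = Bf S b a.
Proof.
move=> hS; rewrite /Bf -[in LHS](trmxK (a^T *m S *m b)) [in LHS]mxE.
by rewrite !trmx_mul trmxK hS mulmxA.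
Qed.

Lemma psd_ker m (S : 'M[R]_m) (x : 'cV[R]_m) : S^T = S ->
  (forall z : 'cV[R]_m, 0 <= (z^T *m S *m z) 0 0) ->
  (x^T *m S *m x) 0 0 = 0 -> S *m x = 0.
Proof.
move=> hS psd hx.
have hz : forall z, Bf S z x = 0.
  move=> z; apply: (@quad0 _ (Bf S z z)); first exact: psd.
  move=> t; have := psd (x + t *: z); rewrite -/(Bf S _ _).
  rewrite BfDl !BfDr !BfZl !BfZr (@Bf_sym _ S x z hS) /Bf hx -/(Bf S z x) -/(Bf S z z).
  by move=> h; apply: (le_trans h); rewrite le_eqVlt; apply/orP; left; apply/eqP; ring.
apply/matrixP => i j; rewrite (ord1 j) [RHS]mxE.
have := hz (delta_mx i 0); rewrite /Bf trmx_delta -mulmxA -rowE mxE.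
by [].
Qed.

Lemma quad_exp n (S : 'M[R]_n) (x y : 'cV[R]_n) :
  (x + y)^T *m S *m (x + y) =
  x^T *m S *m x + x^T *m S *m y + y^T *m S *m x + y^T *m S *m y.
Proof. by rewrite [(x + y)^T]linearD /= !mulmxDl !mulmxDr !addrA. Qed.

Lemma min_lemma m k (S : 'M[R]_m) (Xi : 'M[R]_(m, k)) (X : 'M[R]_k) (A : 'cV[R]_m) :
  S^T = S -> (forall z : 'cV[R]_m, 0 <= (z^T *m S *m z) 0 0) ->
  (Xi^T *m S *m Xi) *m X *m (Xi^T *m S *m Xi) = Xi^T *m S *m Xi ->
  let a := X *m (Xi^T *m S *m A) in
  ((A - Xi *m a)^T *m S *m (A - Xi *m a)) 0 0 =
     (A^T *m (S - S *m Xi *m X *m Xi^T *m S) *m A) 0 0 /\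
  (forall a' : 'cV[R]_k, (A^T *m (S - S *m Xi *m X *m Xi^T *m S) *m A) 0 0 <=
     ((A - Xi *m a')^T *m S *m (A - Xi *m a')) 0 0).
Proof.
move=> hS psd; set M := Xi^T *m S *m Xi => hMX a.
have hM : M^T = M by rewrite /M !trmx_mul trmxK hS mulmxA.
set W := Xi *m (1%:M - X *m M).
have hW : W^T *m S *m W = 0.
  have h0 : M *m (1%:M - X *m M) = 0 by rewrite mulmxBr mulmx1 mulmxA hMX subrr.
  transitivity ((1%:M - X *m M)^T *m (M *m (1%:M - X *m M))).
    by rewrite /W /M trmx_mul !mulmxA.
  by rewrite h0 mulmx0.
have hSW : S *m W = 0.
  apply/matrixP => i j; rewrite [RHS]mxE.
  pose w : 'cV[R]_m := W *m delta_mx j 0.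
  have hw : (w^T *m S *m w) 0 0 = 0.
    have -> : w^T *m S *m w = delta_mx 0 j *m (W^T *m S *m W) *m delta_mx j 0.
      by rewrite /w trmx_mul trmx_delta !mulmxA.
    by rewrite hW mulmx0 mul0mx mxE.
  have := psd_ker hS psd hw => /(congr1 (fun B : 'cV[R]_m => B i 0)).
  by rewrite /w mulmxA -colE !mxE.
have h2 : S *m Xi = S *m Xi *m X *m M.
  have hW2 : S *m W = S *m Xi - S *m Xi *m X *m M by rewrite /W mulmxA mulmxBr mulmx1 !mulmxA.
  by apply/eqP; rewrite -subr_eq0 -hW2 hSW.
have h3 : Xi^T *m S = M *m X^T *m Xi^T *m S.
  have e : (S *m Xi *m X *m M)^T = M *m X^T *m Xi^T *m S.
    by rewrite trmx_mul hM !trmx_mul hS !mulmxA.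
  by rewrite -e -h2 trmx_mul hS.
set b := Xi^T *m S *m A.
have h4 : M *m a = b.
  rewrite /a /b h3 !mulmxA.
  transitivity (M *m X *m M *m X^T *m Xi^T *m S *m A); first by rewrite !mulmxA.
  by rewrite hMX.
set r := A - Xi *m a.
have h5 : Xi^T *m S *m r = 0.
  by rewrite /r mulmxBr -/b mulmxA -/M h4 subrr.
have h5' : r^T *m S *m Xi = 0.
  by have := congr1 trmx h5; rewrite !trmx_mul hS trmx0 trmxK mulmxA.
have t11 : forall N : 'M[R]_1, N^T = N.
  by move=> N; apply/matrixP => i j; rewrite !ord1 mxE.
have eq1 : r^T *m S *m r = A^T *m (S - S *m Xi *m X *m Xi^T *m S) *m A.
  have e1 : r^T *m S *m r = r^T *m S *m A.
    by rewrite {2}/r mulmxBr mulmxA h5' mul0mx subr0.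
  have e2 : r^T *m S *m A = A^T *m S *m A - (A^T *m S *m Xi *m a)^T.
    rewrite /r linearB /= !mulmxBl trmx_mul; congr (_ - _).
    by rewrite [RHS]trmx_mul [(A^T *m S *m Xi)^T]trmx_mul [(A^T *m S)^T]trmx_mul hS trmxK !mulmxA.
  have e3 : A^T *m (S - S *m Xi *m X *m Xi^T *m S) *m A =
            A^T *m S *m A - A^T *m S *m Xi *m a.
    by rewrite mulmxBr mulmxBl /a /b !mulmxA.
  by rewrite e1 e2 e3 t11.
split; first by rewrite -/r eq1.
move=> a'.
have hu : A - Xi *m a' = r + Xi *m (a - a').
  by rewrite /r mulmxBr addrA subrK.
have f1 : r^T *m S *m (Xi *m (a - a')) = 0 by rewrite mulmxA h5' mul0mx.
have f2 : (Xi *m (a - a'))^T *m S *m r = 0.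
  by rewrite trmx_mul -!mulmxA (mulmxA Xi^T) h5 mulmx0.
rewrite hu; move: f1 f2; set v := Xi *m (a - a') => f1 f2.
rewrite (quad_exp S r v) f1 f2 !addr0 -eq1 [in X in _ <= X]mxE.
by rewrite lerDl psd.
Qed.

End Min.
Unset Implicit Arguments.

Theorem lemma8 (R : realType) (d : nat) (hd : (1 <= d)%N)
    (A : 'cV[R]_d.+1) (Xi : 'M[R]_(d.+1, d)) :
  let S := simplex_cov R d in
  let rhs := simplex_vol R d *
    (A^T *m (S - S *m Xi *m mp_pinv (Xi^T *m S *m Xi) *m Xi^T *m S) *m A) 0 0 in
  (exists (a0 : R) (a : 'cV[R]_d), lsq_obj A Xi a0 a = rhs) /\
  (forall (a0 : R) (a : 'cV[R]_d), rhs <= lsq_obj A Xi a0 a).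
Proof.
move=> S rhs.
have hX : is_MP_inverse (Xi^T *m S *m Xi) (mp_pinv (Xi^T *m S *m Xi)).
  have [Y hY] := MP_exists (Xi^T *m S *m Xi).
  by rewrite /mp_pinv; case: xgetP => [x _ hx|/(_ Y hY)].
case: hX => h1 _ _ _.
have [e1 e2] := @min_lemma R d.+1 d S Xi (mp_pinv (Xi^T *m S *m Xi)) A
  (@S_sym R d) (@S_psd R d) h1.
have v0 := vol_gt0 R d.
split.
  set a := mp_pinv (Xi^T *m S *m Xi) *m (Xi^T *m S *m A) in e1.
  exists (\sum_(i < d.+1) (A - Xi *m a) i 0 * simplex_mean R d i 0), a.
  have := @obj_eq R d A Xi (\sum_(i < d.+1) (A - Xi *m a) i 0 * simplex_mean R d i 0) a.
  move=> /= ->; rewrite subrr expr0n mulr0 add0r.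
  by rewrite /rhs -e1.
move=> a0 a.
have := @obj_eq R d A Xi a0 a; move=> /= ->.
rewrite /rhs ler_wpDl //; first by rewrite mulr_ge0 // ?sqr_ge0 // ltW.
by rewrite ler_wpM2l // ltW.
Qed.
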